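(* Let $A,B$ be disjoint infinite sets, $\mathcal M=A\cup B$, and define a metric $\delta$ on $\mathcal M$ by $\delta(x,x)=0$, $\delta(x,y)=1$ if $x,y$ lie in different sets among $A,B$, and $\delta(x,y)=2$ if $x\ne y$ lie in the same set. Then for every strictly increasing function $\delta^*:[0,\infty)\to[0,\infty)$ with $\delta^*(0)=0$, the function $\delta^*\circ\delta$ on $\mathcal M\times\mathcal M$ is not of negative type.
   Context: A symmetric function $\rho:\mathcal M\times\mathcal M\to[0,\infty)$ with $\rho(x,x)=0$ is of negative type if for every $n\ge1$, all points $x_1,\dots,x_n\in\mathcal M$ and all real $a_1,\dots,a_n$ with $\sum_i a_i=0$ one has $\sum_{i,j}a_ia_j\,\rho(x_i,x_j)\le0$. *)

(* Defs.v *)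
From mathcomp Require Import all_boot all_order all_algebra.
From mathcomp Require Import boolp classical_sets cardinality reals.
Set Implicit Arguments. Unset Strict Implicit. Unset Printing Implicit Defensive.
Import Order.TTheory GRing.Theory Num.Theory.
Local Open Scope ring_scope.

Definition negative_type (R : realType) (M : Type) (rho : M -> M -> R) : Prop :=
  forall (n : nat) (x : 'I_n -> M) (a : 'I_n -> R),
    \sum_(i < n) a i = 0 ->
    \sum_(i < n) \sum_(j < n) a i * a j * rho (x i) (x j) <= 0.

Definition delta (R : realType) (A B : Type) (x y : A + B) : R :=
  match x, y with
  | inl a, inl a' => if pselect (a = a') then 0 else 2
  | inr b, inr b' => if pselect (b = b') then 0 else 2
  | _, _ => 1
  end.

(* Main.v *)
Require Import Defs.
From mathcomp Require Import all_boot all_order all_algebra.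
From mathcomp Require Import boolp classical_sets cardinality reals.
From mathcomp Require Import functions.
From mathcomp Require Import ring.
Import Order.TTheory GRing.Theory Num.Theory.
Local Open Scope ring_scope.
Local Open Scope classical_set_scope.

Lemma inj_nat (A : Type) (hA : ~ finite_set [set: A]) :
  exists f : nat -> A, injective f.
Proof.
move/infiniteP: hA => /card_leP [f].
pose g (n : nat) : A := val (f (@SigSub _ _ _ n (mem_set I))).
exists g => m n /val_inj/inj.
move=> H; have := H (mem_set I) (mem_set I).
by move/(congr1 val).
Qed.

Lemma sum_diag (R : realType) m (i : 'I_m) (d : R) (F : 'I_m -> R) :
  (forall j, F j = if i == j then 0 else d) ->
  \sum_(j < m) F j = d *+ m.-1.
Proof.
move=> HF; rewrite (bigD1 i) //= HF eqxx add0r.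
under eq_bigr => j hj do rewrite HF eq_sym (negbTE hj).
by rewrite sumr_const cardC1 card_ord.
Qed.

Lemma key_ineq (R : realFieldType) (d1 d2 : R) k :
  d2 < k.+1%:R * (d2 - d1) -> 0 < d2 *+ k - d1 *+ k.+1.
Proof.
rewrite -[d2 *+ k]mulr_natl -[d1 *+ k.+1]mulr_natl -addn1 natrD => h.
have -> : k%:R * d2 - (k%:R + 1) * d1 = (k%:R + 1) * (d2 - d1) - d2 by ring.
by rewrite subr_gt0.
Qed.

Theorem mainTheorem10 (R : realType) (A B : Type)
  (hA : ~ finite_set [set: A]) (hB : ~ finite_set [set: B])
  (dstar : R -> R)
  (hpos : forall t : R, 0 <= t -> 0 <= dstar t)
  (hinc : forall s t : R, 0 <= s -> s < t -> dstar s < dstar t)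
  (h0 : dstar 0 = 0) :
  ~ negative_type (fun x y : A + B => dstar (delta R x y)).
Proof.
move=> NT.
have [f finj] := inj_nat _ hA.
have [g ginj] := inj_nat _ hB.
set d1 := dstar 1; set d2 := dstar 2.
have d1pos : 0 < d1 by rewrite -h0; apply: hinc.
have d12 : d1 < d2 by apply: hinc => //; rewrite ltr1n.
pose m := (Num.bound (d2 / (d2 - d1))).+1.
have hm : d2 < m%:R * (d2 - d1).
  rewrite -ltr_pdivrMr ?subr_gt0 //.
  apply: lt_le_trans (archi_boundP _) _.
    by apply: divr_ge0; rewrite ?subr_ge0 ltW // (lt_trans d1pos).
  by rewrite ler_nat.
pose x (k : 'I_(m + m)) : A + B :=
  match fintype.split k with inl i => inl (f i) | inr j => inr (g j) end.
pose a (k : 'I_(m + m)) : R :=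
  match fintype.split k with inl _ => 1 | inr _ => -1 end.
have xl i : x (lshift m i) = inl (f i).
  by rewrite /x -[lshift m i]/(unsplit (inl i)) unsplitK.
have xr i : x (rshift m i) = inr (g i).
  by rewrite /x -[rshift m i]/(unsplit (inr i)) unsplitK.
have al i : a (lshift m i) = 1.
  by rewrite /a -[lshift m i]/(unsplit (inl i)) unsplitK.
have ar i : a (rshift m i) = -1.
  by rewrite /a -[rshift m i]/(unsplit (inr i)) unsplitK.
have := NT _ x a.
rewrite big_split_ord /=.
under eq_bigr => i _ do rewrite al.
under [X in _ + X]eq_bigr => i _ do rewrite ar.
rewrite !sumr_const card_ord mulNrn addrN => /(_ erefl).
rewrite big_split_ord /=.
have cross1 (u : A) (v : B) : dstar (delta R (inl u) (inr v)) = d1 by [].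
have cross2 (u : A) (v : B) : dstar (delta R (inr v) (inl u)) = d1 by [].
have E1 (i : 'I_m) : \sum_(j < m + m) a (lshift m i) * a j * dstar (delta R (x (lshift m i)) (x j))
    = d2 *+ m.-1 - d1 *+ m.
  rewrite big_split_ord /=.
  rewrite (@sum_diag R m i d2); last first.
    move=> j; rewrite !al !xl mul1r mul1r /delta.
    case: pselect => [e|ne].
      have e' := finj _ _ e.
      have -> : i == j by apply/eqP/val_inj.
      by rewrite h0.
    case: eqP => [e|_] //.
    by exfalso; apply: ne; rewrite e.
  under eq_bigr => j _ do rewrite al ar xl xr cross1 mul1r mulN1r.
  by rewrite sumr_const card_ord mulNrn.
have E2 (i : 'I_m) : \sum_(j < m + m) a (rshift m i) * a j * dstar (delta R (x (rshift m i)) (x j))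
    = d2 *+ m.-1 - d1 *+ m.
  rewrite big_split_ord /=.
  rewrite [X in X + _ = _](_ : _ = - d1 *+ m); last first.
    under eq_bigr => j _ do rewrite al ar xl xr cross2 mulr1 mulN1r.
    by rewrite sumr_const card_ord.
  rewrite (@sum_diag R m i d2); last first.
    move=> j; rewrite !ar !xr mulrNN mul1r /delta.
    case: pselect => [e|ne].
      have e' := ginj _ _ e.
      have -> : i == j by apply/eqP/val_inj.
      by rewrite /= mul1r h0.
    case: eqP => [e|_]; last by rewrite mul1r.
    by exfalso; apply: ne; rewrite e.
  by rewrite mulNrn addrC.
under eq_bigr => i _ do rewrite E1.
under [X in _ + X]eq_bigr => i _ do rewrite E2.
rewrite !sumr_const card_ord.
have key : 0 < d2 *+ m.-1 - d1 *+ m.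
  exact: (@key_ineq R d1 d2 m.-1 hm).
move=> H.
have : 0 < (d2 *+ m.-1 - d1 *+ m) *+ m + (d2 *+ m.-1 - d1 *+ m) *+ m.
  by apply: addr_gt0; rewrite pmulrn_rgt0.
by rewrite ltNge H.
Qed.
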